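(* Let $K,s\ge1$ and let $f:\{0,1\}^s\to\mathbb Z_K$ be defined by $f(a_1,\ldots,a_s)=(\sum_{i=1}^s a_i)\bmod K$. If $s\ge K^2$, then $|f^{-1}(x)|\le\big(1+4\frac{K}{\sqrt s}\big)|f^{-1}(y)|$ for all $x,y\in\mathbb Z_K$. *)

(* Defs.v *)
From mathcomp Require Import all_boot all_order all_algebra.
Set Implicit Arguments. Unset Strict Implicit. Unset Printing Implicit Defensive.

(* f : {0,1}^s -> Z_K, f(a) = (sum_i a_i) mod K, with {0,1}^s = {ffun 'I_s -> bool}
   and Z_K represented by residues 'I_K = {0,...,K-1}. *)
Definition sum_mod (s K : nat) (a : {ffun 'I_s -> bool}) : nat :=
  (\sum_(i < s) nat_of_bool (a i)) %% K.

Definition fiber_card (s K : nat) (x : 'I_K) : nat :=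
  #|[set a : {ffun 'I_s -> bool} | sum_mod K a == x]|.

(* Main.v *)
Require Import Defs.
From mathcomp Require Import all_boot all_order all_algebra zify ring lra.
Import Order.TTheory GRing.Theory Num.Theory.


Lemma sum_bool_card s (a : {ffun 'I_s -> bool}) :
  \sum_(i < s) nat_of_bool (a i) = #|[set i | a i]|.
Proof.
rewrite -sum1_card [RHS]big_mkcond /=.
apply: eq_bigr => i _; rewrite inE; by case: (a i).

Qed.
Lemma card_level s j :
  #|[set a : {ffun 'I_s -> bool} | \sum_(i < s) nat_of_bool (a i) == j]| = 'C(s, j).
Proof.
pose g (A : {set 'I_s}) : {ffun 'I_s -> bool} := [ffun i => i \in A].
have ginj : injective g.
  move=> A B /ffunP H; apply/setP => i; have := H i; by rewrite !ffunE.
have -> : [set a : {ffun 'I_s -> bool} | \sum_(i < s) nat_of_bool (a i) == j]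
   = g @: [set A : {set 'I_s} | #|A| == j].
  apply/setP => a; rewrite inE sum_bool_card; apply/idP/imsetP.
    move=> H; exists [set i | a i]; first by rewrite inE.
    by apply/ffunP => i; rewrite ffunE inE.
move=> [A]; rewrite inE => /eqP <- ->.
rewrite (_ : [set i | g A i] = A) //; apply/setP => i; by rewrite inE ffunE.
by rewrite card_imset // card_draws card_ord.
Qed.


Lemma sum_le s (a : {ffun 'I_s -> bool}) : \sum_(i < s) nat_of_bool (a i) < s.+1.
Proof.
rewrite ltnS; apply: leq_trans (_ : \sum_(i < s) 1 <= s).
  by apply: leq_sum => i _; case: (a i).
by rewrite sum_nat_const card_ord muln1.
Qed.

Lemma fiberE s K (x : 'I_K) :
  fiber_card s x = \sum_(j < s.+1 | j %% K == x) 'C(s, j).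
Proof.
rewrite /fiber_card.
transitivity (\sum_(j < s.+1 | j %% K == x)
   \sum_(a : {ffun 'I_s -> bool}) ((\sum_(i < s) nat_of_bool (a i)) == j : nat)); last first.
  apply: eq_bigr => j _; rewrite -card_level -sum1_card [RHS]big_mkcond /=.
  by apply: eq_bigr => a _; rewrite inE.
rewrite exchange_big /= -sum1_card [LHS]big_mkcond /=.
apply: eq_bigr => a _; rewrite inE /sum_mod.
have hS := sum_le s a; move: hS; set S := \sum_(i < s) _ => hS.
case: (boolP (S %% K == x)) => hx.
  rewrite (bigD1 (Ordinal hS)) //= eqxx big1 ?addn0 // => j /andP [_ hj].
  case: eqP => // E; case/eqP: hj; exact: val_inj.
rewrite big1 // => j hj; case: eqP => // E; move: hj hx; by rewrite -E => ->.
Qed.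


Lemma block (F : nat -> nat) n K r : r < K ->
  \sum_(n * K <= j < n * K + K | j %% K == r) F j = F (r + n * K).
Proof.
move=> hr; rewrite -{1}[n * K]add0n big_addn addKn.
under eq_bigl => i do rewrite addnC modnMDl.
rewrite big_mkord.
rewrite (big_pred1 (Ordinal hr)) //= => j /=.
by rewrite modn_small.
Qed.

Lemma reindex_mod (F : nat -> nat) K r L : r < K ->
  \sum_(0 <= j < L * K | j %% K == r) F j = \sum_(0 <= k < L) F (r + k * K).
Proof.
move=> hr; elim: L => [|L IH]; first by rewrite mul0n !big_geq.
rewrite mulSn addnC (big_cat_nat _ (n := L * K)) //= ?leq_addr // IH block //.
by rewrite big_nat_recr.
Qed.

Lemma reindex_mod2 (F : nat -> nat) K r B L : r < K -> B <= L * K ->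
  (forall j, B <= j -> F j = 0) ->
  \sum_(j < B | j %% K == r) F j = \sum_(0 <= k < L) F (r + k * K).
Proof.
move=> hr hB hF; rewrite -reindex_mod // big_mkord (big_ord_widen_cond (L * K) (fun j => j %% K == r) F hB) /=.
rewrite big_mkcond [RHS]big_mkcond /=; apply: eq_bigr => i _.
case: (i %% K == r) => //=; case: ltnP => // h; by rewrite hF.
Qed.


Lemma bin_up s j : j.+1 <= s./2 -> 'C(s, j) <= 'C(s, j.+1).
Proof.
move=> h; have e := mul_bin_left s j.
have h2 : j.+1 <= s - j by rewrite -divn2 in h; lia.
rewrite -(leq_pmul2l (ltn0Sn j)) e leq_mul2r; by rewrite h2 orbT.
Qed.

Lemma bin_dn s j : s./2 <= j -> 'C(s, j.+1) <= 'C(s, j).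
Proof.
move=> h; have e := mul_bin_left s j.
have h2 : s - j <= j.+1 by rewrite -divn2 in h; lia.
rewrite -(leq_pmul2l (ltn0Sn j)) e leq_mul2r; by rewrite h2 orbT.
Qed.

Lemma bin_mono_up s i j : i <= j -> j <= s./2 -> 'C(s, i) <= 'C(s, j).
Proof.
move=> hij; rewrite -(subnKC hij); elim: (j - i) => [|d IH] h; first by rewrite addn0.
rewrite addnS in h *; exact: (leq_trans (IH (ltnW h)) (bin_up _ _ h)).
Qed.

Lemma bin_mono_dn s i j : i <= j -> s./2 <= i -> 'C(s, j) <= 'C(s, i).
Proof.
move=> hij h; rewrite -(subnKC hij); elim: (j - i) => [|d IH]; first by rewrite addn0.
rewrite addnS; apply: leq_trans (bin_dn _ _ _) IH; lia.
Qed.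

Lemma bin_max s j : 'C(s, j) <= 'C(s, s./2).
Proof.
case: (leqP j s./2) => h; first exact: bin_mono_up.
apply: bin_mono_dn => //; exact: ltnW.
Qed.

Lemma leq_sum_nat m n (E1 E2 : nat -> nat) :
  (forall k, m <= k < n -> E1 k <= E2 k) ->
  \sum_(m <= k < n) E1 k <= \sum_(m <= k < n) E2 k.
Proof.
move=> h; rewrite big_nat_cond [X in _ <= X]big_nat_cond.
apply: leq_sum => k /andP [hk _]; exact: h.
Qed.

Lemma pair0 (b c : nat -> nat) t M n :
  (forall k, k < t -> b k <= c k) -> b t <= M ->
  (forall k, t < k -> b k <= c k.-1) ->
  \sum_(0 <= k < t.+1 + n) b k <= \sum_(0 <= k < t + n) c k + M.
Proof.
move=> h1 h2 h3; elim: n => [|n IH].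
  rewrite !addn0 big_nat_recr //.
  apply: leq_add h2; apply: leq_sum_nat => k /andP [_ hk]; exact: h1.
rewrite (addnS t.+1 n) (addnS t n) big_nat_recr // [\sum_(0 <= k < (t + n).+1) c k]big_nat_recr // addnAC; apply: leq_add IH _.
have := h3 (t.+1 + n); rewrite addSn /=; apply; lia.
Qed.

Lemma pair1 (b c : nat -> nat) t M n :
  (forall k, k < t -> b k <= c k.+1) -> b t <= M ->
  (forall k, t < k -> b k <= c k) ->
  \sum_(0 <= k < t.+1 + n) b k <= \sum_(0 <= k < t.+1 + n) c k + M.
Proof.
move=> h1 h2 h3; elim: n => [|n IH].
  rewrite !addn0 big_nat_recr // big_nat_recl //.
  apply: leq_add; last exact: h2.
  apply: leq_trans (leq_addl (c 0) _); apply: leq_sum_nat => k /andP [_ hk]; exact: h1.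
rewrite (addnS t.+1 n) big_nat_recr // [\sum_(0 <= k < (t.+1 + n).+1) c k]big_nat_recr // addnAC; apply: leq_add IH _.
apply: h3; lia.
Qed.



Lemma fiberA s K x y L : 0 < K -> x < K -> y < K -> s.+1 < L ->
  \sum_(0 <= k < L) 'C(s, x + k * K) <=
  \sum_(0 <= k < L) 'C(s, y + k * K) + 'C(s, s./2).
Proof.
move=> K0 xK yK sL.
set m := s./2.
have ms : m <= s by rewrite /m -divn2; lia.
case: (leqP x y) => hxy.
  have exP : exists k, m < y + k * K.
    exists m.+1; have : m.+1 <= m.+1 * K by rewrite leq_pmulr.
    lia.
  case: (ex_minnP exP) => t Pt tmin.
  have tle : t <= m.+1.
    apply: tmin; have : m.+1 <= m.+1 * K by rewrite leq_pmulr.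
    lia.
  have -> : L = t.+1 + (L - t.+1) by lia.
  apply: leq_trans (pair0 (fun k => 'C(s, x + k * K))
     (fun k => 'C(s, y + k * K)) t (binomial s m) (L - t.+1) _ _ _) _.
  - move=> k kt; apply: bin_mono_up; first by rewrite leq_add2r.
    case: (leqP (y + k * K) m) => // h; have := tmin k h; lia.
  - exact: bin_max.
  - move=> k tk; apply: bin_mono_dn.
      have e : k = k.-1.+1 by lia.
      rewrite [in X in _ <= X]e mulSn; lia.
    have : t * K <= k.-1 * K by rewrite leq_mul2r; apply/orP; right; lia.
    lia.
  rewrite leq_add2r addSn big_nat_recr //=; exact: leq_addr.
have exP : exists k, m < y + k.+1 * K.
  exists m; have : m.+1 <= m.+1 * K by rewrite leq_pmulr.
  lia.
case: (ex_minnP exP) => t Pt tmin.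
have tle : t <= m.
  apply: tmin; have : m.+1 <= m.+1 * K by rewrite leq_pmulr.
  lia.
have -> : L = t.+1 + (L - t.+1) by lia.
apply: (pair1 (fun k => 'C(s, x + k * K))
   (fun k => 'C(s, y + k * K)) t (binomial s m) (L - t.+1)).
- move=> k kt; apply: bin_mono_up.
    rewrite mulSn; lia.
  case: (leqP (y + k.+1 * K) m) => // h; have := tmin k h; lia.
- exact: bin_max.
- move=> k tk; apply: bin_mono_dn; first lia.
  have : t.+1 * K <= k * K by rewrite leq_mul2r; apply/orP; right.
  lia.
Qed.


Lemma cbin_rec n : n.+1 * 'C(n.*2.+2, n.+1) = 2 * n.*2.+1 * 'C(n.*2, n).
Proof.
have e1 := mul_bin_down n.*2.+1 n.
have e2 := mul_bin_diag n.*2.+2 n.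
rewrite /= in e1 e2.
have h : n.*2.+1 - n = n.+1 by rewrite -addnn; lia.
rewrite h in e1.
apply/eqP; rewrite -(eqn_pmul2l (ltn0Sn n)); apply/eqP.
rewrite -e2 -[2 * _ * _]mulnA e1 -!mul2n; ring.
Qed.

Lemma poly_ineq n : 4 * n.*2.+1 ^ 2 * n * (32 * n.+1 ^ 2 + 8 * n.+1 + 1)
   <= 16 * n.+1 ^ 3 * (32 * n ^ 2 + 8 * n + 1).
Proof. rewrite -addnn; nia. Qed.

Definition Q n := 32 * n ^ 2 + 8 * n + 1.

Lemma cbin_inv n : 2 <= n -> 25 * 'C(n.*2, n) ^ 2 * Q n <= 256 * n * 16 ^ n.
Proof.
elim: n => // n IH; rewrite ltnS leq_eqVlt => /orP [/eqP <- | hn].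
  by [].
have {}IH := IH hn.
set c := 'C(n.*2, n) in IH *.
rewrite doubleS.
set c' := 'C(n.*2.+2, n.+1).
have E : n.+1 * c' = 2 * n.*2.+1 * c by exact: cbin_rec.
have pos : 0 < n.+1 ^ 2 * (n * Q n).
  rewrite muln_gt0 expn_gt0 /= muln_gt0 /Q; lia.
rewrite -(leq_pmul2r pos).
have -> : 25 * c' ^ 2 * Q n.+1 * (n.+1 ^ 2 * (n * Q n))
     = (25 * c ^ 2 * Q n) * (4 * n.*2.+1 ^ 2 * n * Q n.+1).
  have -> : 25 * c' ^ 2 * Q n.+1 * (n.+1 ^ 2 * (n * Q n)) =
     25 * (n.+1 * c') ^ 2 * Q n.+1 * (n * Q n) by ring.
  rewrite E; ring.
have -> : 256 * n.+1 * 16 ^ n.+1 * (n.+1 ^ 2 * (n * Q n))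
     = (256 * n * 16 ^ n) * (16 * n.+1 ^ 3 * Q n).
  rewrite expnS; ring.
apply: leq_mul IH _; exact: poly_ineq.
Qed.

Lemma cbin_bound n : 0 < n -> 50 * n * 'C(n.*2, n) ^ 2 <= 16 * 16 ^ n.
Proof.
case: n => // n _; case: n => [|n]; first by [].
have := cbin_inv n.+2 isT.
set c := 'C(_, _); set P := 16 ^ _ => h.
have Qp : 0 < Q n.+2 by rewrite /Q; lia.
rewrite -(leq_pmul2r Qp).
apply: (@leq_trans (2 * n.+2 * (256 * n.+2 * P))).
  have -> : 50 * n.+2 * c ^ 2 * Q n.+2 = 2 * n.+2 * (25 * c ^ 2 * Q n.+2) by ring.
  by rewrite leq_mul2l h orbT.
have -> : 2 * n.+2 * (256 * n.+2 * P) = (512 * n.+2 ^ 2) * P by ring.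
have -> : 16 * P * Q n.+2 = (16 * Q n.+2) * P by ring.
rewrite leq_mul2r; apply/orP; right; rewrite /Q; lia.
Qed.

Lemma central s : 0 < s -> 25 * s * 'C(s, s./2) ^ 2 <= 16 * 4 ^ s.
Proof.
move=> s0; have e := odd_double_half s.
move: e; set n := s./2; clearbody n => e.
case: (odd s) e => /= e; rewrite -e; rewrite -e in s0.
  have hC : 'C(n.*2.+2, n.+1) = 2 * 'C(1 + n.*2, n).
    rewrite binS add1n; congr (_ + _).
    rewrite -(@bin_sub n.*2.+1 n); last by rewrite -addnn; lia.
    congr binomial; rewrite -addnn; lia.
    lia.
  have := cbin_bound n.+1 isT; rewrite doubleS hC.
  have -> : 16 ^ n.+1 = 16 * 4 ^ n.*2 by rewrite -mul2n expnM expnS.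
  have -> : 4 ^ (1 + n.*2) = 4 * 4 ^ n.*2 by rewrite expnD.
  set C := 'C(_, _); set F := 4 ^ _.
  rewrite -addnn; nia.
rewrite add0n.
have n0 : 0 < n by rewrite add0n double_gt0 in s0; exact: s0.
have := cbin_bound n n0.
have -> : 4 ^ n.*2 = 16 ^ n by rewrite -mul2n expnM.
rewrite -mul2n; nia.
Qed.


Lemma fiber_sum s K : 0 < K -> \sum_(z < K) fiber_card s z = 2 ^ s.
Proof.
move=> K0; rewrite /fiber_card.
under eq_bigr => z _ do rewrite -sum1_card big_mkcond /=.
rewrite exchange_big /=.
transitivity (\sum_(a : {ffun 'I_s -> bool}) 1).
  apply: eq_bigr => a _.
  rewrite (bigD1 (Ordinal (ltn_pmod (\sum_(i < s) nat_of_bool (a i)) K0))) //=.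
  rewrite inE /sum_mod eqxx big1 // => z hz; rewrite inE.
  case: eqP => // E; move: hz; rewrite -(inj_eq val_inj) /= -E eqxx.
  by [].
by rewrite sum1_card card_ffun card_bool card_ord.
Qed.

Lemma fiber_diff s K (x y : 'I_K) : 0 < K ->
  fiber_card s x <= fiber_card s y + 'C(s, s./2).
Proof.
move=> K0.
have hB : s.+1 <= s.+2 * K by rewrite -[s.+1]muln1; apply: leq_mul => //; lia.
have hF : forall j, s.+1 <= j -> 'C(s, j) = 0 by move=> j hj; rewrite bin_small.
rewrite !fiberE (reindex_mod2 (fun j => 'C(s, j)) _ _ _ _ (ltn_ord x) hB hF)
   (reindex_mod2 (fun j => 'C(s, j)) _ _ _ _ (ltn_ord y) hB hF).
exact: fiberA.
Qed.
Local Open Scope ring_scope.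

Theorem lemma5 (R : rcfType) (K s : nat) (hK : (1 <= K)%N) (hs : (1 <= s)%N)
  (hsK : (K ^ 2 <= s)%N) (x y : 'I_K) :
  (fiber_card s x)%:R <=
    (1 + 4 * (K%:R / Num.sqrt (s%:R : R))) * (fiber_card s y)%:R.
Proof.
set Nx := fiber_card s x; set Ny := fiber_card s y; set M := 'C(s, s./2).
have hA : (Nx <= Ny + M)%N by apply: fiber_diff.
have hS : (2 ^ s <= K * (Ny + M))%N.
  rewrite -(fiber_sum s K hK); apply: leq_trans (_ : \sum_(z < K) (Ny + M) <= _)%N.
    by apply: leq_sum => z _; apply: fiber_diff.
  by rewrite sum_nat_const card_ord.
have hC := central s hs.
set p := (2 ^ s)%N in hS.
have hC' : (25 * s * M ^ 2 <= 16 * p ^ 2)%N.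
  have -> : (p ^ 2 = 4 ^ s)%N by rewrite /p -expnM mulnC expnM.
  exact: hC.
set r := Num.sqrt (s%:R : R).
have r0 : 0 < r by rewrite sqrtr_gt0 ltr0n.
have rr : r ^+ 2 = s%:R by rewrite sqr_sqrtr // ler0n.
have hA' : Nx%:R <= Ny%:R + M%:R :> R by rewrite -natrD ler_nat.
have hS' : p%:R <= K%:R * (Ny%:R + M%:R) :> R by rewrite -natrD -natrM ler_nat.
have hC'' : 25 * s%:R * M%:R ^+ 2 <= 16 * p%:R ^+ 2 :> R.
  have := hC'; rewrite -(ler_nat R) !natrM !natrX => h; exact: h.
have hK' : K%:R ^+ 2 <= s%:R :> R by rewrite -natrX ler_nat.
have K0 : 0 <= K%:R :> R by [].
have M0 : 0 <= M%:R :> R by [].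
have N0 : 0 <= Ny%:R :> R by [].
have p0 : 0 <= p%:R :> R by [].
have Kr : K%:R <= r.
  rewrite -(@ler_pXn2r _ 2) ?nnegrE ?rr //; exact: ltW.
have Mr : 5 * M%:R * r <= 4 * p%:R.
  rewrite -(@ler_pXn2r _ 2) ?nnegrE; last 2 first.
  - by rewrite !mulr_ge0 // ltW.
  - by rewrite mulr_ge0.
  rewrite !exprMn rr; lra.
  by [].
have key : M%:R * r <= 4 * K%:R * Ny%:R.
  have : K%:R * M%:R <= r * M%:R by rewrite ler_wpM2r.
  nra.
rewrite mulrDl mul1r; apply: (le_trans hA'); rewrite lerD2l.
rewrite -mulrA mulrAC mulrA ler_pdivlMr // mulrC; lra.
Qed.
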